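(* There exists a $2$-regular curve in $\mathbb{E}^4$ which does not admit a generalized Bishop frame of type F.
   Context: A regular curve $\gamma: I\to\mathbb{E}^4$ ($I$ an open interval) is considered with arc-length parametrization; $\mathbb{T}=\gamma'$ is its unit tangent vector. It is $2$-regular if $\mathbb{T}'$ is nowhere vanishing. A frame on $\gamma$ is an ordered orthonormal frame $(\mathbb{T},\mathbb{Z}_1,\mathbb{Z}_2,\mathbb{Z}_3)$ of smooth vector fields along $\gamma$ whose first vector is $\mathbb{T}$; it is identified with the smooth map $\mathbb{Z}: I\to O(4)$ whose rows are these vectors. Its coefficient matrix is the $\mathfrak{o}(4)$-valued function $X$ with $\mathbb{Z}'=X\mathbb{Z}$. A frame is of type F if, after possibly permuting $\mathbb{Z}_1,\mathbb{Z}_2,\mathbb{Z}_3$ (keeping $\mathbb{T}$ first), its coefficient matrix has the form $\begin{pmatrix}0&x_1&0&0\\-x_1&0&x_2&0\\0&-x_2&0&x_3\\0&0&-x_3&0\end{pmatrix}$ for some smooth functions $x_1,x_2,x_3$ (no sign conditions). *)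

(* Defs.v *)
From Stdlib Require Import Reals Lra Lia.
From Coquelicot Require Import Coquelicot.
Open Scope R_scope.

Definition in_I (a b : Rbar) (t : R) : Prop := Rbar_lt a t /\ Rbar_lt t b.

Definition smooth_on (a b : Rbar) (f : R -> R) : Prop :=
  forall (n : nat) (t : R), in_I a b t -> ex_derive (Derive_n f n) t.

Definition dot4 (u v : nat -> R) : R :=
  u 0%nat * v 0%nat + u 1%nat * v 1%nat + u 2%nat * v 2%nat + u 3%nat * v 3%nat.

(* A curve gamma : I -> E^4 is given componentwise: gamma i t, i < 4. *)
Definition tangent (gamma : nat -> R -> R) (i : nat) (t : R) : R :=
  Derive (gamma i) t.

Definition arclength_curve (a b : Rbar) (gamma : nat -> R -> R) : Prop :=
  Rbar_lt a b /\
  (forall i, (i < 4)%nat -> smooth_on a b (gamma i)) /\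
  (forall t, in_I a b t ->
     dot4 (fun i => tangent gamma i t) (fun i => tangent gamma i t) = 1).

Definition two_regular (a b : Rbar) (gamma : nat -> R -> R) : Prop :=
  forall t, in_I a b t ->
    exists i, (i < 4)%nat /\ Derive (tangent gamma i) t <> 0.

(* A frame: Z i j t is the j-th component of the i-th frame vector
   (row i of the O(4)-valued map); row 0 is T. *)
Definition is_frame (a b : Rbar) (gamma : nat -> R -> R)
    (Z : nat -> nat -> R -> R) : Prop :=
  (forall i j, (i < 4)%nat -> (j < 4)%nat -> smooth_on a b (Z i j)) /\
  (forall t, in_I a b t -> forall i j, (i < 4)%nat -> (j < 4)%nat ->
     dot4 (fun k => Z i k t) (fun k => Z j k t) = if Nat.eqb i j then 1 else 0) /\
  (forall t, in_I a b t -> forall j, (j < 4)%nat -> Z 0%nat j t = tangent gamma j t).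

Definition Fmatrix (x1 x2 x3 : R) (r c : nat) : R :=
  match r, c with
  | O, S O => x1 | S O, O => - x1
  | S O, S (S O) => x2 | S (S O), S O => - x2
  | S (S O), S (S (S O)) => x3 | S (S (S O)), S (S O) => - x3
  | _, _ => 0
  end.

(* permutation of {0,1,2,3} fixing 0 (i.e. permuting Z1,Z2,Z3, keeping T first) *)
Definition perm_fixing_T (p : nat -> nat) : Prop :=
  p 0%nat = 0%nat /\
  (forall i, (i < 4)%nat -> (p i < 4)%nat) /\
  (forall i j, (i < 4)%nat -> (j < 4)%nat -> p i = p j -> i = j).

(* Type F: after permuting rows by p, the frame W r := Z (p r) satisfies
   W' = X W with X = Fmatrix x1 x2 x3 for smooth x1, x2, x3 (no sign conditions). *)
Definition type_F (a b : Rbar) (Z : nat -> nat -> R -> R) : Prop :=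
  exists (p : nat -> nat) (x1 x2 x3 : R -> R),
    perm_fixing_T p /\
    smooth_on a b x1 /\ smooth_on a b x2 /\ smooth_on a b x3 /\
    forall t, in_I a b t -> forall r j, (r < 4)%nat -> (j < 4)%nat ->
      Derive (Z (p r) j) t =
        Fmatrix (x1 t) (x2 t) (x3 t) r 0%nat * Z (p 0%nat) j t +
        Fmatrix (x1 t) (x2 t) (x3 t) r 1%nat * Z (p 1%nat) j t +
        Fmatrix (x1 t) (x2 t) (x3 t) r 2%nat * Z (p 2%nat) j t +
        Fmatrix (x1 t) (x2 t) (x3 t) r 3%nat * Z (p 3%nat) j t.

(* Main.v *)
Require Import Defs.
From Stdlib Require Import Reals.
From Coquelicot Require Import Coquelicot.
From Stdlib Require Import Lra Lia List Nsatz.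
Open Scope R_scope.


Lemma D_eq (f : R -> R) (x l l' : R) : is_derive f x l -> l = l' -> is_derive f x l'.
Proof. intros H <-; exact H. Qed.
Lemma D_plus (f g : R -> R) (x a b : R) : is_derive f x a -> is_derive g x b ->
  is_derive (fun t => f t + g t) x (a + b).
Proof. intros; apply (is_derive_plus f g); auto. Qed.
Lemma D_minus (f g : R -> R) (x a b : R) : is_derive f x a -> is_derive g x b ->
  is_derive (fun t => f t - g t) x (a - b).
Proof. intros; apply (is_derive_minus f g); auto. Qed.
Lemma D_mult (f g : R -> R) (x a b : R) : is_derive f x a -> is_derive g x b ->
  is_derive (fun t => f t * g t) x (a * g x + f x * b).
Proof. intros; apply (is_derive_mult f g); auto. intros; apply Rmult_comm. Qed.
Lemma D_opp (f : R -> R) (x a : R) : is_derive f x a -> is_derive (fun t => - f t) x (- a).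
Proof. intros; apply (is_derive_opp f); auto. Qed.
Lemma D_const (c x : R) : is_derive (fun _ => c) x 0.
Proof. apply (is_derive_const c x). Qed.
Lemma D_cos (x : R) : is_derive (fun t => cos t) x (- sin x).
Proof. apply is_derive_cos. Qed.
Lemma D_sin (x : R) : is_derive (fun t => sin t) x (cos x).
Proof. apply is_derive_sin. Qed.

Fixpoint evalL (L : list (R*nat)) (t : R) : R :=
  match L with nil => 0 | (c,k)::L' => c * (/t)^k * exp(-/t) + evalL L' t end.
Fixpoint derivL (L : list (R*nat)) : list (R*nat) :=
  match L with nil => nil
  | (c,k)::L' => (-(c * INR k), S k) :: (c, S (S k)) :: derivL L' end.
Fixpoint shiftL (L : list (R*nat)) : list (R*nat) :=
  match L with nil => nil | (c,k)::L' => (c, S k) :: shiftL L' end.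
Fixpoint Kb (L : list (R*nat)) : R :=
  match L with nil => 0 | (c,k)::L' => Rabs c * INR (S k) ^ (S k) + Kb L' end.

Lemma term_deriv c k x : x <> 0 ->
  is_derive (fun t => c * (/t)^k * exp(-/t)) x
    (-(c * INR k) * (/x)^(S k) * exp(-/x) + c * (/x)^(S (S k)) * exp (-/x)).
Proof.
  intros Hx. auto_derive; auto.
  destruct k as [|k].
  - simpl. field. auto.
  - rewrite S_INR. simpl. field. auto.
Qed.

Lemma evalL_deriv L x : x <> 0 -> is_derive (evalL L) x (evalL (derivL L) x).
Proof.
  intros Hx. induction L as [|[c k] L IH]; cbn [evalL derivL].
  - apply (D_const 0 x).
  - eapply D_eq. { apply D_plus. apply term_deriv; auto. apply IH. } lra.
Qed.

Lemma evalL_shift L x : x <> 0 -> evalL (shiftL L) x = evalL L x / x.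
Proof.
  intros Hx. induction L as [|[c k] L IH]; simpl. field; auto.
  rewrite IH. field; auto.
Qed.

Lemma exp_mult_nat (m : nat) z : exp (INR m * z) = exp z ^ m.
Proof.
  induction m. simpl. rewrite Rmult_0_l. apply exp_0.
  rewrite S_INR. replace ((INR m + 1) * z) with (INR m * z + z) by ring.
  rewrite exp_plus, IHm. simpl. ring.
Qed.

Lemma exp_bound k y : 0 < y -> y ^ k * exp (-y) <= INR (S k) ^ (S k) / y.
Proof.
  intros Hy. set (m := S k). assert (Hm : 0 < INR m) by (apply lt_0_INR; unfold m; lia).
  assert (E : exp y = exp (y / INR m) ^ m).
  { rewrite <- exp_mult_nat. f_equal. field. lra. }
  assert (Hz : (y / INR m) ^ m <= exp y).
  { rewrite E. apply pow_incr. split. apply Rlt_le, Rdiv_lt_0_compat; lra.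
    destruct (Req_dec (y / INR m) 0) as [h|h]. rewrite h, exp_0; lra.
    pose proof (exp_ineq1 _ h). lra. }
  rewrite exp_Ropp.
  assert (Hyp : 0 < (y / INR m) ^ m) by (apply pow_lt, Rdiv_lt_0_compat; lra).
  assert (Hex := exp_pos y).
  replace ((y / INR m) ^ m) with (y ^ m / INR m ^ m) in Hz, Hyp
    by (unfold Rdiv; rewrite Rpow_mult_distr, pow_inv; reflexivity).
  assert (HmM : 0 < INR m ^ m) by (apply pow_lt; lra).
  apply Rmult_le_reg_r with (exp y * y). apply Rmult_lt_0_compat; lra.
  replace (y ^ k * / exp y * (exp y * y)) with (y ^ m) by (unfold m; simpl; field; lra).
  replace (INR m ^ m / y * (exp y * y)) with (INR m ^ m * exp y) by (field; lra).
  apply Rmult_le_reg_r with (/ INR m ^ m). apply Rinv_0_lt_compat; lra.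
  replace (INR m ^ m * exp y * / INR m ^ m) with (exp y) by (field; lra).
  exact Hz.
Qed.

Lemma Kb_ge0 L : 0 <= Kb L.
Proof.
  induction L as [|[c k] L IH]; cbn [Kb]. lra.
  assert (0 <= INR (S k) ^ S k) by (apply pow_le, pos_INR).
  pose proof (Rabs_pos c). nra.
Qed.

Lemma evalL_bound L h : 0 < h -> Rabs (evalL L h) <= Kb L * h.
Proof.
  intros Hh. induction L as [|[c k] L IH]; cbn [evalL Kb].
  - rewrite Rabs_R0. lra.
  - eapply Rle_trans. apply Rabs_triang.
    assert (Rabs (c * (/ h) ^ k * exp (- / h)) <= Rabs c * (INR (S k) ^ S k * h)).
    { rewrite Rmult_assoc, Rabs_mult.
      apply Rmult_le_compat_l. apply Rabs_pos.
      assert (Hi : 0 < / h) by (apply Rinv_0_lt_compat; lra).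
      rewrite Rabs_right.
      2: { apply Rle_ge, Rmult_le_pos. apply pow_le; lra. apply Rlt_le, exp_pos. }
      pose proof (exp_bound k (/h) Hi) as H.
      unfold Rdiv in H. rewrite Rinv_inv in H. exact H. }
    lra.
Qed.

Definition Gl (L : list (R*nat)) (t : R) : R :=
  if Rlt_dec 0 t then evalL L t else 0.

Lemma Gl_deriv L x : is_derive (Gl L) x (Gl (derivL L) x).
Proof.
  destruct (Rtotal_order x 0) as [Hn|[H0|Hp]].
  - unfold Gl at 2. destruct (Rlt_dec 0 x); [lra|].
    apply is_derive_ext_loc with (fun _ => 0).
    exists (mkposreal (-x) ltac:(lra)). intros y Hy.
    unfold ball in Hy; simpl in Hy; unfold AbsRing_ball, abs, minus, plus, opp in Hy; simpl in Hy.
    unfold Gl. destruct (Rlt_dec 0 y); auto.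
    apply Rabs_def2 in Hy. lra.
    apply (is_derive_const 0 x).
  - subst x. unfold Gl at 2. destruct (Rlt_dec 0 0); [lra|].
    apply is_derive_Reals. intros eps Heps.
    set (K := Kb (shiftL L)). assert (HK : 0 <= K) by apply Kb_ge0.
    exists (mkposreal (eps / (K + 1)) ltac:(apply Rdiv_lt_0_compat; lra)).
    intros h Hh0 Hh. simpl in Hh.
    unfold Gl. destruct (Rlt_dec 0 0); [lra|].
    rewrite Rplus_0_l.
    destruct (Rlt_dec 0 h).
    + replace ((evalL L h - 0) / h - 0) with (evalL (shiftL L) h)
        by (rewrite evalL_shift; [field|]; lra).
      eapply Rle_lt_trans. apply evalL_bound; auto. fold K.
      rewrite Rabs_right in Hh by lra.
      apply Rlt_le_trans with (K * (eps / (K+1)) + eps / (K+1)).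
      assert (0 < eps / (K + 1)) by (apply Rdiv_lt_0_compat; lra). assert (K*h <= K*(eps/(K+1))) by (apply Rmult_le_compat_l; lra). lra.
      right. field. lra.
    + replace ((0 - 0) / h - 0) with 0 by (field; auto). rewrite Rabs_R0. lra.
  - unfold Gl at 2. destruct (Rlt_dec 0 x); [|lra].
    apply is_derive_ext_loc with (evalL L).
    exists (mkposreal x Hp). intros y Hy.
    unfold ball in Hy; simpl in Hy; unfold AbsRing_ball, abs, minus, plus, opp in Hy; simpl in Hy.
    unfold Gl. destruct (Rlt_dec 0 y); auto.
    apply Rabs_def2 in Hy. lra.
    apply evalL_deriv. lra.
Qed.


Definition L0 : list (R*nat) := (1, 0%nat) :: nil.
Definition F := Gl L0.
Definition F1 := Gl (derivL L0).
Definition F2 := Gl (derivL (derivL L0)).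
Definition Fn t := F (-t).
Definition Fn1 t := - F1 (-t).
Definition Fn2 t := F2 (-t).
Definition cF t := cos (F t).
Definition sF t := sin (F t).
Definition cG t := cos (Fn t).
Definition sG t := sin (Fn t).

Lemma D_comp (f g : R -> R) (x a b : R) : is_derive f (g x) a -> is_derive g x b ->
  is_derive (fun t => f (g t)) x (a * b).
Proof. intros. eapply D_eq. apply (is_derive_comp f g); eauto. simpl. unfold scal; simpl. unfold mult; simpl. apply Rmult_comm. Qed.

Lemma D_id (x : R) : is_derive (fun t : R => t) x 1.
Proof. exact (is_derive_id (K := R_AbsRing) x). Qed.

Lemma dGln L (x : R) : is_derive (fun t => Gl L (-t)) x (- Gl (derivL L) (-x)).
Proof.
  eapply D_eq. apply (D_comp (Gl L) (fun t => -t)). apply Gl_deriv.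
  apply D_opp. apply D_id. ring.
Qed.

Lemma dF (x : R) : is_derive F x (F1 x). Proof. apply Gl_deriv. Qed.
Lemma dF1 (x : R) : is_derive F1 x (F2 x). Proof. apply Gl_deriv. Qed.
Lemma dFn (x : R) : is_derive Fn x (Fn1 x). Proof. apply (dGln L0). Qed.
Lemma dFn1 (x : R) : is_derive Fn1 x (Fn2 x).
Proof. eapply D_eq. apply D_opp. apply (dGln (derivL L0)). unfold Fn2, F2. ring. Qed.
Lemma dcF (x : R) : is_derive cF x (- sF x * F1 x).
Proof. eapply D_eq. apply (D_comp cos F). apply is_derive_cos. apply dF. unfold sF; ring. Qed.
Lemma dsF (x : R) : is_derive sF x (cF x * F1 x).
Proof. eapply D_eq. apply (D_comp sin F). apply is_derive_sin. apply dF. unfold cF; ring. Qed.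
Lemma dcG (x : R) : is_derive cG x (- sG x * Fn1 x).
Proof. eapply D_eq. apply (D_comp cos Fn). apply is_derive_cos. apply dFn. unfold sG; ring. Qed.
Lemma dsG (x : R) : is_derive sG x (cG x * Fn1 x).
Proof. eapply D_eq. apply (D_comp sin Fn). apply is_derive_sin. apply dFn. unfold cG; ring. Qed.

Ltac dt := match goal with
  | |- is_derive (fun _ => ?c) _ _ => apply D_const
  | |- is_derive (fun t => @?f t + @?g t) _ _ => apply (D_plus f g)
  | |- is_derive (fun t => @?f t - @?g t) _ _ => apply (D_minus f g)
  | |- is_derive (fun t => @?f t * @?g t) _ _ => apply (D_mult f g)
  | |- is_derive (fun t => - @?f t) _ _ => apply (D_opp f)
  | |- is_derive (fun t => cos t) _ _ => apply D_cos
  | |- is_derive cos _ _ => apply D_cos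
  | |- is_derive (fun t => sin t) _ _ => apply D_sin
  | |- is_derive sin _ _ => apply D_sin
  | |- is_derive (fun t => F t) _ _ => apply dF
  | |- is_derive F _ _ => apply dF
  | |- is_derive (fun t => F1 t) _ _ => apply dF1
  | |- is_derive F1 _ _ => apply dF1
  | |- is_derive (fun t => Fn t) _ _ => apply dFn
  | |- is_derive Fn _ _ => apply dFn
  | |- is_derive (fun t => Fn1 t) _ _ => apply dFn1
  | |- is_derive Fn1 _ _ => apply dFn1
  | |- is_derive (fun t => cF t) _ _ => apply dcF
  | |- is_derive cF _ _ => apply dcF
  | |- is_derive (fun t => sF t) _ _ => apply dsF
  | |- is_derive sF _ _ => apply dsF
  | |- is_derive (fun t => cG t) _ _ => apply dcG
  | |- is_derive cG _ _ => apply dcG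
  | |- is_derive (fun t => sG t) _ _ => apply dsG
  | |- is_derive sG _ _ => apply dsG
  end.

Inductive Alg : (R -> R) -> Prop :=
| A_cos : Alg cos
| A_sin : Alg sin
| A_Gl L : Alg (Gl L)
| A_Gln L : Alg (fun t => Gl L (-t))
| A_cF : Alg cF | A_sF : Alg sF | A_cG : Alg cG | A_sG : Alg sG
| A_const c : Alg (fun _ => c)
| A_plus f g : Alg f -> Alg g -> Alg (fun t => f t + g t)
| A_mult f g : Alg f -> Alg g -> Alg (fun t => f t * g t)
| A_ext f g : Alg f -> (forall t, f t = g t) -> Alg g.

Lemma Alg_der f : Alg f -> exists f', Alg f' /\ forall x, is_derive f x (f' x).
Proof.
  induction 1.
  - exists (fun t => -1 * sin t). split. apply A_mult. apply A_const. apply A_sin.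
    intro x. eapply D_eq. apply is_derive_cos. ring.
  - exists cos. split. apply A_cos. apply is_derive_sin.
  - exists (Gl (derivL L)). split. apply A_Gl. apply Gl_deriv.
  - exists (fun t => -1 * Gl (derivL L) (-t)). split. apply A_mult. apply A_const. apply A_Gln.
    intro x. eapply D_eq. apply dGln. ring.
  - exists (fun t => -1 * (sF t * F1 t)). split. apply A_mult. apply A_const. apply A_mult. apply A_sF. apply A_Gl.
    intro x. eapply D_eq. apply dcF. ring.
  - exists (fun t => cF t * F1 t). split. apply A_mult. apply A_cF. apply A_Gl.
    intro x. apply dsF.
  - exists (fun t => -1 * (sG t * (-1 * Gl (derivL L0) (-t)))). split.
    apply A_mult. apply A_const. apply A_mult. apply A_sG. apply A_mult. apply A_const. apply A_Gln.
    intro x. eapply D_eq. apply dcG. unfold Fn1, F1. ring.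
  - exists (fun t => cG t * (-1 * Gl (derivL L0) (-t))). split.
    apply A_mult. apply A_cG. apply A_mult. apply A_const. apply A_Gln.
    intro x. eapply D_eq. apply dsG. unfold Fn1, F1. ring.
  - exists (fun _ => 0). split. apply A_const. intro; apply D_const.
  - destruct IHAlg1 as [f' [Hf1 Hf2]], IHAlg2 as [g' [Hg1 Hg2]].
    exists (fun t => f' t + g' t). split. apply A_plus; auto. intro; apply D_plus; auto.
  - destruct IHAlg1 as [f' [Hf1 Hf2]], IHAlg2 as [g' [Hg1 Hg2]].
    exists (fun t => f' t * g t + f t * g' t). split. apply A_plus; apply A_mult; auto.
    intro; apply D_mult; auto.
  - destruct IHAlg as [f' [Hf1 Hf2]]. exists f'. split; auto.
    intro x. apply (is_derive_ext f g); auto.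
Qed.

Lemma Alg_smooth f : Alg f -> forall n, Alg (Derive_n f n) /\ forall x, ex_derive (Derive_n f n) x.
Proof.
  intros Hf n. induction n.
  - simpl. split; auto. intro x. destruct (Alg_der f Hf) as [f' [_ H]]. exists (f' x); auto.
  - destruct IHn as [IH _]. destruct (Alg_der _ IH) as [f' [H1 H2]].
    assert (E : forall t, f' t = Derive_n f (S n) t).
    { intro t. simpl. symmetry. apply is_derive_unique. apply H2. }
    split. apply (A_ext f'); auto.
    intro x. destruct (Alg_der _ (A_ext f' _ H1 E)) as [g' [_ Hg]]. exists (g' x); auto.
Qed.


Definition P t := cF t * cG t.
Definition P1 t := - sF t * F1 t * cG t + cF t * (- sG t * Fn1 t).
Definition P2 t := - cF t * F1 t * F1 t * cG t - sF t * F2 t * cG t + 2 * sF t * F1 t * sG t * Fn1 t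
   - cF t * cG t * Fn1 t * Fn1 t - cF t * sG t * Fn2 t.
Definition Ta0 t := cos t * (cF t * cG t).
Definition Ta1 t := sin t * (cF t * cG t).
Definition Ta2 t := sF t.
Definition Ta3 t := sG t.
Definition Tb0 t := - sin t * P t + cos t * P1 t.
Definition Tb1 t := cos t * P t + sin t * P1 t.
Definition Tb2 t := cF t * F1 t.
Definition Tb3 t := cG t * Fn1 t.
Definition Tc0 t := - cos t * P t - 2 * sin t * P1 t + cos t * P2 t.
Definition Tc1 t := - sin t * P t + 2 * cos t * P1 t + sin t * P2 t.
Definition Tc2 t := - sF t * F1 t * F1 t + cF t * F2 t.
Definition Tc3 t := - sG t * Fn1 t * Fn1 t + cG t * Fn2 t.

Ltac dsolve := eapply D_eq; [repeat dt | ring].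

Lemma dTa0 (x : R) : is_derive Ta0 x (Tb0 x). Proof. unfold Ta0, Tb0, P, P1. dsolve. Qed.
Lemma dTa1 (x : R) : is_derive Ta1 x (Tb1 x). Proof. unfold Ta1, Tb1, P, P1. dsolve. Qed.
Lemma dTa2 (x : R) : is_derive Ta2 x (Tb2 x). Proof. unfold Ta2, Tb2. apply dsF. Qed.
Lemma dTa3 (x : R) : is_derive Ta3 x (Tb3 x). Proof. unfold Ta3, Tb3. apply dsG. Qed.
Lemma dTb0 (x : R) : is_derive Tb0 x (Tc0 x). Proof. unfold Tb0, Tc0, P, P1, P2. dsolve. Qed.
Lemma dTb1 (x : R) : is_derive Tb1 x (Tc1 x). Proof. unfold Tb1, Tc1, P, P1, P2. dsolve. Qed.
Lemma dTb2 (x : R) : is_derive Tb2 x (Tc2 x). Proof. unfold Tb2, Tc2. dsolve. Qed.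
Lemma dTb3 (x : R) : is_derive Tb3 x (Tc3 x). Proof. unfold Tb3, Tc3. dsolve. Qed.

Ltac alg := match goal with
  | |- Alg (fun _ => ?c) => apply A_const
  | |- Alg (fun t => @?f t + @?g t) => apply (A_plus f g)
  | |- Alg (fun t => @?f t * @?g t) => apply (A_mult f g)
  | |- Alg (fun t => - @?f t) =>
      apply (A_ext (fun t => -1 * f t)); [apply (A_mult (fun _ => -1) f) | intro; ring]
  | |- Alg (fun t => cos t) => apply A_cos
  | |- Alg cos => apply A_cos
  | |- Alg (fun t => sin t) => apply A_sin
  | |- Alg sin => apply A_sin
  | |- Alg (fun t => cF t) => apply A_cF
  | |- Alg cF => apply A_cF
  | |- Alg (fun t => sF t) => apply A_sF
  | |- Alg sF => apply A_sF
  | |- Alg (fun t => cG t) => apply A_cG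
  | |- Alg cG => apply A_cG
  | |- Alg (fun t => sG t) => apply A_sG
  | |- Alg sG => apply A_sG
  end.

Definition Tcomp (i : nat) : R -> R :=
  match i with 0 => Ta0 | 1 => Ta1 | 2 => Ta2 | 3 => Ta3 | _ => fun _ => 0 end.
Definition Tbcomp (i : nat) : R -> R :=
  match i with 0 => Tb0 | 1 => Tb1 | 2 => Tb2 | 3 => Tb3 | _ => fun _ => 0 end.
Definition Tccomp (i : nat) : R -> R :=
  match i with 0 => Tc0 | 1 => Tc1 | 2 => Tc2 | 3 => Tc3 | _ => fun _ => 0 end.

Lemma dTcomp i (x : R) : is_derive (Tcomp i) x (Tbcomp i x).
Proof. destruct i as [|[|[|[|i]]]]; simpl; auto using dTa0, dTa1, dTa2, dTa3. apply D_const. Qed.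
Lemma dTbcomp i (x : R) : is_derive (Tbcomp i) x (Tccomp i x).
Proof. destruct i as [|[|[|[|i]]]]; simpl; auto using dTb0, dTb1, dTb2, dTb3. apply D_const. Qed.

Lemma Tcomp_alg i : Alg (Tcomp i).
Proof. destruct i as [|[|[|[|i]]]]; simpl; unfold Ta0, Ta1, Ta2, Ta3; repeat alg. Qed.


Lemma sc (x : R) : sin x * sin x + cos x * cos x = 1.
Proof. pose proof (sin2_cos2 x). unfold Rsqr in H. lra. Qed.

Lemma Gl_nonpos L t : t <= 0 -> Gl L t = 0.
Proof. intros. unfold Gl. destruct (Rlt_dec 0 t); auto. lra. Qed.

Lemma pos_facts t : 0 < t -> Fn t = 0 /\ Fn1 t = 0 /\ Fn2 t = 0 /\ sG t = 0 /\ cG t = 1.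
Proof.
  intros H. unfold Fn, Fn1, Fn2, F, F1, F2, sG, cG, Fn, F.
  rewrite !Gl_nonpos by lra. rewrite sin_0, cos_0. repeat split; ring.
Qed.

Lemma neg_facts t : t <= 0 -> F t = 0 /\ F1 t = 0 /\ F2 t = 0 /\ sF t = 0 /\ cF t = 1.
Proof.
  intros H. unfold F1, F2, sF, cF, F.
  rewrite !Gl_nonpos by lra. rewrite sin_0, cos_0. repeat split; ring.
Qed.

Lemma F_lt1 t : 0 <= F t < 1.
Proof.
  unfold F, Gl. destruct (Rlt_dec 0 t); [|lra].
  simpl. rewrite Rmult_1_r, Rmult_1_l, Rplus_0_r.
  split. apply Rlt_le, exp_pos. rewrite <- exp_0. apply exp_increasing.
  assert (0 < / t) by (apply Rinv_0_lt_compat; lra). lra.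
Qed.

Lemma cF_pos t : 0 < cF t.
Proof. unfold cF. pose proof (F_lt1 t). pose proof PI2_1. apply cos_gt_0; lra. Qed.
Lemma cG_pos t : 0 < cG t.
Proof. unfold cG, Fn. pose proof (F_lt1 (-t)). pose proof PI2_1. apply cos_gt_0; lra. Qed.

Lemma T_unit t : Ta0 t * Ta0 t + Ta1 t * Ta1 t + Ta2 t * Ta2 t + Ta3 t * Ta3 t = 1.
Proof.
  unfold Ta0, Ta1, Ta2, Ta3. pose proof (sc t).
  destruct (Rlt_dec 0 t) as [h|h].
  - destruct (pos_facts t h) as (_&_&_&->&->).
    transitivity ((sin t * sin t + cos t * cos t) * (cF t * cF t) + sF t * sF t); [ring|].
    rewrite sc. pose proof (sc (F t)). unfold sF, cF. lra.
  - destruct (neg_facts t ltac:(lra)) as (_&_&_&->&->).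
    transitivity ((sin t * sin t + cos t * cos t) * (cG t * cG t) + sG t * sG t); [ring|].
    rewrite sc. pose proof (sc (Fn t)). unfold sG, cG. lra.
Qed.

Lemma Tb_nz t : Tb0 t <> 0 \/ Tb1 t <> 0.
Proof.
  assert (E : cos t * Tb1 t - sin t * Tb0 t = P t).
  { unfold Tb0, Tb1. transitivity ((sin t * sin t + cos t * cos t) * P t); [ring|]. rewrite sc; ring. }
  assert (0 < P t) by (unfold P; pose proof (cF_pos t); pose proof (cG_pos t); nra).
  destruct (Req_dec (Tb0 t) 0) as [h|h]; [|auto]. right. intro h'. rewrite h, h' in E. lra.
Qed.

Definition gamma (i : nat) (t : R) : R := RInt (Tcomp i) 0 t.

Lemma Alg_cont f x : Alg f -> continuous f x.
Proof. intros H. apply (ex_derive_continuous (K:=R_AbsRing) (V:=R_NormedModule)). destruct (Alg_der f H) as [f' [_ Hd]]. exists (f' x); auto. Qed.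

Lemma gamma_deriv i x : is_derive (gamma i) x (Tcomp i x).
Proof.
  apply is_derive_RInt with 0. apply filter_forall. intro b. unfold gamma.
  apply (RInt_correct (V:=R_CompleteNormedModule)). apply (ex_RInt_continuous (V:=R_CompleteNormedModule)). intros. apply Alg_cont, Tcomp_alg.
  apply Alg_cont, Tcomp_alg.
Qed.

Lemma tangent_eq i t : tangent gamma i t = Tcomp i t.
Proof. unfold tangent. apply is_derive_unique. apply gamma_deriv. Qed.

Lemma Alg_smooth_on f : Alg f -> smooth_on m_infty p_infty f.
Proof. intros H n t _. apply (Alg_smooth f H n). Qed.

Lemma gamma_smooth i : smooth_on m_infty p_infty (gamma i).
Proof.
  intros n t _. destruct n as [|n].
  - exists (Tcomp i t). apply gamma_deriv.
  - apply ex_derive_ext with (Derive_n (Tcomp i) n).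
    + intro s. replace (S n) with (n + 1)%nat by lia. rewrite <- (Derive_n_comp (gamma i) n 1). apply Derive_n_ext.
      intro u. simpl. symmetry. apply is_derive_unique. apply gamma_deriv.
    + apply (Alg_smooth _ (Tcomp_alg i) n).
Qed.

Lemma curve_ok : arclength_curve m_infty p_infty gamma.
Proof.
  split. simpl; auto. split.
  - intros i _. apply gamma_smooth.
  - intros t _. unfold dot4. rewrite !tangent_eq. simpl. apply T_unit.
Qed.

Lemma Derive_tangent i t : Derive (tangent gamma i) t = Tbcomp i t.
Proof.
  rewrite (Derive_ext _ (Tcomp i)) by apply tangent_eq.
  apply is_derive_unique, dTcomp.
Qed.

Lemma two_reg : two_regular m_infty p_infty gamma.
Proof.
  intros t _. destruct (Tb_nz t) as [h|h].
  - exists 0%nat. split. lia. rewrite Derive_tangent. exact h.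
  - exists 1%nat. split. lia. rewrite Derive_tangent. exact h.
Qed.


Definition det3 (a0 a1 a2 b0 b1 b2 c0 c1 c2 : R) :=
  a0*(b1*c2-b2*c1) - a1*(b0*c2-b2*c0) + a2*(b0*c1-b1*c0).

Lemma det3_dep a0 a1 a2 b0 b1 b2 al be :
  det3 a0 a1 a2 b0 b1 b2 (al*b0+be*a0) (al*b1+be*a1) (al*b2+be*a2) = 0.
Proof. unfold det3. ring. Qed.

Lemma cont_zero_pos (f : R -> R) : continuous f 0 -> (forall t, 0 < t < 1/2 -> f t = 0) -> f 0 = 0.
Proof.
  intros Hc Hz. apply continuity_pt_filterlim in Hc.
  destruct (Req_dec (f 0) 0) as [h|h]; auto. exfalso.
  destruct (Hc (Rabs (f 0)) (Rabs_pos_lt _ h)) as [alp [Ha H]].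
  set (x := Rmin alp (1/2) / 2).
  assert (0 < Rmin alp (1/2)) by (apply Rmin_pos; lra).
  assert (Rmin alp (1/2) <= alp) by apply Rmin_l.
  assert (Rmin alp (1/2) <= 1/2) by apply Rmin_r.
  specialize (H x). simpl in H. unfold R_dist in H.
  rewrite Hz in H by (unfold x; lra).
  assert (Hx : Rabs (0 - f 0) < Rabs (f 0)).
  { apply H. split. split. exact I. unfold x; lra. rewrite Rminus_0_r, Rabs_right; unfold x; lra. }
  rewrite Rminus_0_l, Rabs_Ropp in Hx. lra.
Qed.

Lemma cont_zero_neg (f : R -> R) : continuous f 0 -> (forall t, -1/2 < t < 0 -> f t = 0) -> f 0 = 0.
Proof.
  intros Hc Hz. apply continuity_pt_filterlim in Hc.
  destruct (Req_dec (f 0) 0) as [h|h]; auto. exfalso.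
  destruct (Hc (Rabs (f 0)) (Rabs_pos_lt _ h)) as [alp [Ha H]].
  set (x := - (Rmin alp (1/2) / 2)).
  assert (0 < Rmin alp (1/2)) by (apply Rmin_pos; lra).
  assert (Rmin alp (1/2) <= alp) by apply Rmin_l.
  assert (Rmin alp (1/2) <= 1/2) by apply Rmin_r.
  specialize (H x). simpl in H. unfold R_dist in H.
  rewrite Hz in H by (unfold x; lra).
  assert (Hx : Rabs (0 - f 0) < Rabs (f 0)).
  { apply H. split. split. exact I. unfold x; lra. rewrite Rminus_0_r, Rabs_left; unfold x; lra. }
  rewrite Rminus_0_l, Rabs_Ropp in Hx. lra.
Qed.

Lemma F2_pos t : 0 < t < 1/2 -> 0 < F2 t.
Proof.
  intros H. assert (E : F2 t = (/t)^3 * exp(-/t) * (/t - 2)).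
  { unfold F2, Gl. destruct (Rlt_dec 0 t); [|lra]. cbn [evalL derivL L0]. simpl INR. simpl. ring. }
  rewrite E. assert (2 < /t).
  { apply Rmult_lt_reg_r with t. lra. rewrite Rinv_l by lra. lra. }
  apply Rmult_lt_0_compat. apply Rmult_lt_0_compat. apply pow_lt; lra. apply exp_pos. lra.
Qed.

Lemma F_pos t : 0 < t -> 0 < F t.
Proof. intros. unfold F, Gl. destruct (Rlt_dec 0 t); [|lra]. simpl. pose proof (exp_pos (-/t)). lra. Qed.

Lemma sF_pos t : 0 < t -> 0 < sF t.
Proof. intros. unfold sF. pose proof (F_pos t H). pose proof (F_lt1 t). pose proof PI2_1. pose proof PI2_Rlt_PI. apply sin_gt_0; lra. Qed.

Lemma sG_pos t : t < 0 -> 0 < sG t.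
Proof. intros. unfold sG, Fn. pose proof (F_pos (-t) ltac:(lra)). pose proof (F_lt1 (-t)). pose proof PI2_1. pose proof PI2_Rlt_PI. apply sin_gt_0; lra. Qed.

Lemma det_pos t : 0 < t < 1/2 ->
  0 < det3 (Ta0 t) (Ta1 t) (Ta2 t) (Tb0 t) (Tb1 t) (Tb2 t) (Tc0 t) (Tc1 t) (Tc2 t).
Proof.
  intros H.
  assert (E : det3 (Ta0 t) (Ta1 t) (Ta2 t) (Tb0 t) (Tb1 t) (Tb2 t) (Tc0 t) (Tc1 t) (Tc2 t)
     = cF t * (F2 t + sF t * cF t) + 2 * F1 t * F1 t * sF t).
  { unfold det3, Ta0, Ta1, Ta2, Tb0, Tb1, Tb2, Tc0, Tc1, Tc2, P, P1, P2.
    destruct (pos_facts t ltac:(lra)) as (_&->&->&->&->).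
    pose proof (sc t). pose proof (sc (F t)). fold (sF t) (cF t) in *. nsatz. }
  rewrite E. pose proof (cF_pos t). pose proof (sF_pos t ltac:(lra)). pose proof (F2_pos t H).
  assert (0 <= F1 t * F1 t) by nra.
  assert (0 < sF t * cF t) by nra. assert (0 <= 2 * F1 t * F1 t * sF t) by nra. nra.
Qed.

Lemma det_neg t : -1/2 < t < 0 ->
  0 < det3 (Ta0 t) (Ta1 t) (Ta3 t) (Tb0 t) (Tb1 t) (Tb3 t) (Tc0 t) (Tc1 t) (Tc3 t).
Proof.
  intros H.
  assert (E : det3 (Ta0 t) (Ta1 t) (Ta3 t) (Tb0 t) (Tb1 t) (Tb3 t) (Tc0 t) (Tc1 t) (Tc3 t)
     = cG t * (Fn2 t + sG t * cG t) + 2 * Fn1 t * Fn1 t * sG t).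
  { unfold det3, Ta0, Ta1, Ta3, Tb0, Tb1, Tb3, Tc0, Tc1, Tc3, P, P1, P2.
    destruct (neg_facts t ltac:(lra)) as (_&->&->&->&->).
    pose proof (sc t). pose proof (sc (Fn t)). fold (sG t) (cG t) in *. nsatz. }
  rewrite E. pose proof (cG_pos t). pose proof (sG_pos t ltac:(lra)).
  assert (0 < Fn2 t) by (unfold Fn2; apply F2_pos; lra).
  assert (0 <= Fn1 t * Fn1 t) by nra.
  assert (0 < sG t * cG t) by nra. assert (0 <= 2 * Fn1 t * Fn1 t * sG t) by nra. nra.
Qed.


Lemma D_ext (f g : R -> R) (x l : R) : (forall t, f t = g t) -> is_derive f x l -> is_derive g x l.
Proof. intros; apply (is_derive_ext f g); auto. Qed.

Lemma inI t : in_I m_infty p_infty t.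
Proof. split; simpl; auto. Qed.

Lemma zero_vals : Ta0 0 = 1 /\ Ta1 0 = 0 /\ Ta2 0 = 0 /\ Ta3 0 = 0 /\
                  Tb0 0 = 0 /\ Tb1 0 = 1 /\ Tb2 0 = 0 /\ Tb3 0 = 0.
Proof.
  assert (HG : Fn 0 = 0 /\ Fn1 0 = 0 /\ sG 0 = 0 /\ cG 0 = 1).
  { unfold Fn, Fn1, sG, cG, Fn. rewrite Ropp_0. destruct (neg_facts 0 ltac:(lra)) as (A&B&_&_&_).
    rewrite A, B, sin_0, cos_0. repeat split; ring. }
  destruct HG as (_&B&C&D). destruct (neg_facts 0 ltac:(lra)) as (_&B'&_&C'&D').
  unfold Ta0, Ta1, Ta2, Ta3, Tb0, Tb1, Tb2, Tb3, P, P1.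
  rewrite B, C, D, B', C', D', sin_0, cos_0. repeat split; ring.
Qed.

Theorem no_frame : ~ (exists Z : nat -> nat -> R -> R,
    is_frame m_infty p_infty gamma Z /\ type_F m_infty p_infty Z).
Proof.
  intros [Z [[Hsm [Horth HT]] [p [x1 [x2 [x3 [[Hp0 [Hplt Hpinj]] [Hs1 [Hs2 [Hs3 Heq]]]]]]]]]].
  assert (HT' : forall j t, (j < 4)%nat -> Z 0%nat j t = Tcomp j t).
  { intros j t Hj. rewrite HT by (auto; apply inI). apply tangent_eq. }
  assert (Hp1 : (p 1 < 4)%nat) by (apply Hplt; lia).
  assert (Hp2 : (p 2 < 4)%nat) by (apply Hplt; lia).
  assert (N20 : p 2%nat <> 0%nat) by (intro h; rewrite <- Hp0 in h; apply Hpinj in h; lia).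
  assert (N21 : p 2%nat <> p 1%nat) by (intro h; apply Hpinj in h; lia).
  assert (N10 : p 1%nat <> 0%nat) by (intro h; rewrite <- Hp0 in h; apply Hpinj in h; lia).
  assert (Ha : forall t j, (j < 4)%nat -> Tbcomp j t = x1 t * Z (p 1%nat) j t).
  { intros t j Hj. pose proof (Heq t (inI t) 0%nat j ltac:(lia) Hj) as H.
    cbn [Fmatrix] in H. rewrite Hp0 in H.
    rewrite (Derive_ext _ (Tcomp j)) in H by (intro; apply HT'; auto).
    rewrite (is_derive_unique _ _ _ (dTcomp j t)) in H. rewrite H. ring. }
  assert (Hb : forall t j, (j < 4)%nat ->
     Derive (Z (p 1%nat) j) t = - x1 t * Tcomp j t + x2 t * Z (p 2%nat) j t).
  { intros t j Hj. pose proof (Heq t (inI t) 1%nat j ltac:(lia) Hj) as H.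
    cbn [Fmatrix] in H. rewrite Hp0, HT' in H by auto. rewrite H. ring. }
  assert (Hx1 : forall t, x1 t <> 0).
  { intros t h. destruct (Tb_nz t) as [h'|h'].
    - apply h'. pose proof (Ha t 0%nat ltac:(lia)) as E. simpl in E. rewrite E, h. ring.
    - apply h'. pose proof (Ha t 1%nat ltac:(lia)) as E. simpl in E. rewrite E, h. ring. }
  assert (Hdx1 : forall t, is_derive x1 t (Derive x1 t)).
  { intro t. apply Derive_correct. apply (Hs1 0%nat t (inI t)). }
  assert (Key : forall t j, (j < 4)%nat ->
     x1 t ^ 2 * (- x1 t * Tcomp j t + x2 t * Z (p 2%nat) j t)
       = Tccomp j t * x1 t - Tbcomp j t * Derive x1 t).
  { intros t j Hj.
    assert (D : is_derive (Z (p 1%nat) j) t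
        ((Tccomp j t * x1 t - Tbcomp j t * Derive x1 t) / x1 t ^ 2)).
    { apply (D_ext (fun s => Tbcomp j s / x1 s)).
      - intro s. rewrite Ha by auto. field. auto.
      - apply is_derive_div; auto. apply dTbcomp. }
    apply is_derive_unique in D. rewrite Hb in D by auto. rewrite D. field. auto. }
  assert (Hpos : forall t, 0 < t < 1/2 -> Z (p 2%nat) 3%nat t = 0).
  { intros t Ht.
    assert (Hx2 : x2 t <> 0).
    { intro h. pose proof (det_pos t Ht) as Hd.
      pose proof (Key t 0%nat ltac:(lia)) as K0. pose proof (Key t 1%nat ltac:(lia)) as K1.
      pose proof (Key t 2%nat ltac:(lia)) as K2. simpl in K0, K1, K2. rewrite h in K0, K1, K2.
      pose proof (Hx1 t) as hx.
      set (al := Derive x1 t / x1 t). set (be := - x1 t ^ 2).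
      assert (E0 : Tc0 t = al * Tb0 t + be * Ta0 t).
      { apply (Rmult_eq_reg_r (x1 t)); auto.
        transitivity (x1 t ^ 2 * (- x1 t * Ta0 t + 0 * Z (p 2%nat) 0%nat t) + Tb0 t * Derive x1 t). lra.
        unfold al, be; field; auto. }
      assert (E1 : Tc1 t = al * Tb1 t + be * Ta1 t).
      { apply (Rmult_eq_reg_r (x1 t)); auto.
        transitivity (x1 t ^ 2 * (- x1 t * Ta1 t + 0 * Z (p 2%nat) 1%nat t) + Tb1 t * Derive x1 t). lra.
        unfold al, be; field; auto. }
      assert (E2 : Tc2 t = al * Tb2 t + be * Ta2 t).
      { apply (Rmult_eq_reg_r (x1 t)); auto.
        transitivity (x1 t ^ 2 * (- x1 t * Ta2 t + 0 * Z (p 2%nat) 2%nat t) + Tb2 t * Derive x1 t). lra.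
        unfold al, be; field; auto. }
      rewrite E0, E1, E2, det3_dep in Hd. lra. }
    pose proof (Key t 3%nat ltac:(lia)) as K3. simpl in K3.
    unfold Ta3, Tb3, Tc3 in K3. destruct (pos_facts t ltac:(lra)) as (_&A&B&C&D).
    rewrite A, B, C in K3.
    assert (x1 t ^ 2 * x2 t * Z (p 2%nat) 3%nat t = 0) by lra.
    pose proof (Hx1 t).
    apply Rmult_integral in H. destruct H as [H|H]; auto.
    exfalso. apply Rmult_integral in H. destruct H as [H|H]; auto.
    apply pow_nonzero with (n := 2%nat) in H0. auto. }
  assert (Hneg : forall t, -1/2 < t < 0 -> Z (p 2%nat) 2%nat t = 0).
  { intros t Ht.
    assert (Hx2 : x2 t <> 0).
    { intro h. pose proof (det_neg t Ht) as Hd.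
      pose proof (Key t 0%nat ltac:(lia)) as K0. pose proof (Key t 1%nat ltac:(lia)) as K1.
      pose proof (Key t 3%nat ltac:(lia)) as K2. simpl in K0, K1, K2. rewrite h in K0, K1, K2.
      pose proof (Hx1 t) as hx.
      set (al := Derive x1 t / x1 t). set (be := - x1 t ^ 2).
      assert (E0 : Tc0 t = al * Tb0 t + be * Ta0 t).
      { apply (Rmult_eq_reg_r (x1 t)); auto.
        transitivity (x1 t ^ 2 * (- x1 t * Ta0 t + 0 * Z (p 2%nat) 0%nat t) + Tb0 t * Derive x1 t). lra.
        unfold al, be; field; auto. }
      assert (E1 : Tc1 t = al * Tb1 t + be * Ta1 t).
      { apply (Rmult_eq_reg_r (x1 t)); auto.
        transitivity (x1 t ^ 2 * (- x1 t * Ta1 t + 0 * Z (p 2%nat) 1%nat t) + Tb1 t * Derive x1 t). lra.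
        unfold al, be; field; auto. }
      assert (E2 : Tc3 t = al * Tb3 t + be * Ta3 t).
      { apply (Rmult_eq_reg_r (x1 t)); auto.
        transitivity (x1 t ^ 2 * (- x1 t * Ta3 t + 0 * Z (p 2%nat) 3%nat t) + Tb3 t * Derive x1 t). lra.
        unfold al, be; field; auto. }
      rewrite E0, E1, E2, det3_dep in Hd. lra. }
    pose proof (Key t 2%nat ltac:(lia)) as K3. simpl in K3.
    unfold Ta2, Tb2, Tc2 in K3. destruct (neg_facts t ltac:(lra)) as (A&B&C&D&E).
    rewrite B, C, D in K3.
    assert (x1 t ^ 2 * x2 t * Z (p 2%nat) 2%nat t = 0) by lra.
    pose proof (Hx1 t).
    apply Rmult_integral in H. destruct H as [H|H]; auto.
    exfalso. apply Rmult_integral in H. destruct H as [H|H]; auto.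
    apply pow_nonzero with (n := 2%nat) in H0. auto. }
  assert (Hc : forall j, (j < 4)%nat -> continuous (Z (p 2%nat) j) 0).
  { intros j Hj. apply (ex_derive_continuous (K:=R_AbsRing) (V:=R_NormedModule)).
    apply (Hsm (p 2%nat) j Hp2 Hj 0%nat 0 (inI 0)). }
  assert (W3 : Z (p 2%nat) 3%nat 0 = 0) by (apply cont_zero_pos; auto).
  assert (W2 : Z (p 2%nat) 2%nat 0 = 0) by (apply cont_zero_neg; auto).
  destruct zero_vals as (a0&a1&a2&a3&b0&b1&b2&b3).
  pose proof (Horth 0 (inI 0) (p 2%nat) 0%nat Hp2 ltac:(lia)) as O1.
  rewrite (proj2 (Nat.eqb_neq _ _) N20) in O1. unfold dot4 in O1.
  rewrite !HT' in O1 by lia. simpl in O1. rewrite a0, a1, a2, a3 in O1.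
  pose proof (Horth 0 (inI 0) (p 2%nat) (p 1%nat) Hp2 Hp1) as O2.
  rewrite (proj2 (Nat.eqb_neq _ _) N21) in O2. unfold dot4 in O2.
  pose proof (Hx1 0) as hx.
  assert (Hw : forall k, (k < 4)%nat -> Z (p 1%nat) k 0 = Tbcomp k 0 / x1 0).
  { intros k Hk. rewrite Ha by auto. field. auto. }
  rewrite !Hw in O2 by lia. simpl in O2. rewrite b0, b1, b2, b3 in O2.
  pose proof (Horth 0 (inI 0) (p 2%nat) (p 2%nat) Hp2 Hp2) as O3.
  rewrite Nat.eqb_refl in O3. unfold dot4 in O3.
  rewrite W2, W3 in O3.
  assert (Z (p 2%nat) 0%nat 0 = 0) by lra.
  assert (Z (p 2%nat) 1%nat 0 = 0).
  { apply (Rmult_eq_reg_r (/ x1 0)). 2: apply Rinv_neq_0_compat; auto.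
    unfold Rdiv in O2. lra. }
  rewrite H, H0 in O3. lra.
Qed.

Theorem theorem3 :
  exists (a b : Rbar) (gamma : nat -> R -> R),
    arclength_curve a b gamma /\ two_regular a b gamma /\
    ~ (exists Z : nat -> nat -> R -> R, is_frame a b gamma Z /\ type_F a b Z).
Proof.
  exists m_infty, p_infty, gamma. split. apply curve_ok. split. apply two_reg. apply no_frame.
Qed.
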